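(* Let $w$ be a positive integer, let $\lambda_0<\lambda_1<\cdots<\lambda_w$ be real numbers with $\lambda_w=\lambda_0+1$, and let $b_0,b_1,\ldots,b_{w-1}$ be integers such that $b_{k-1}\neq b_k$ for $k=1,\ldots,w-1$ and $1+b_{w-1}\neq b_0$. Let \[K'=\bigcup_{k=0}^{w-1}[b_k+\lambda_k,\, b_k+\lambda_{k+1}].\] Then $K'$ is an $\mathcal{N}$-set, and \[(K'-K')\cap\mathbb{N}=\{|b_k-b_{k-1}| : k=1,\ldots,w-1\}\cup\{|1+b_{w-1}-b_0|\},\] which is a finite set of relatively prime positive integers.
   Context: $\mathbb{N}$ denotes the set of positive integers. $K-K=\{x-y : x,y\in K\}$. A set of integers is relatively prime if it is nonempty and its elements have no common factor greater than $1$. An $\mathcal{N}$-set in $\mathbb{R}^n$ is a compact set $K\subseteq\mathbb{R}^n$ such that for every $x\in\mathbb{R}^n$ there exists $y\in K$ with $x-y\in\mathbb{Z}^n$. *)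

(* Defs.v *)
From Stdlib Require Import Reals Lra Lia ZArith Arith List.
Open Scope R_scope.

Definition N_set (K : R -> Prop) : Prop :=
  compact K /\ forall x : R, exists y : R, K y /\ exists z : Z, x - y = IZR z.

Definition Kprime (w : nat) (lam : nat -> R) (b : nat -> Z) (x : R) : Prop :=
  exists k : nat, (k < w)%nat /\
    IZR (b k) + lam k <= x /\ x <= IZR (b k) + lam (S k).

(* (K - K) ∩ N, with N the positive integers *)
Definition diff_pos_nat (K : R -> Prop) (n : nat) : Prop :=
  (0 < n)%nat /\ exists x y : R, K x /\ K y /\ x - y = INR n.

Definition Dset (w : nat) (b : nat -> Z) (n : nat) : Prop :=
  (exists k : nat, (1 <= k)%nat /\ (k <= w - 1)%nat /\
      n = Z.abs_nat (b k - b (k - 1)%nat)%Z)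
  \/ n = Z.abs_nat (1 + b (w - 1)%nat - b 0%nat)%Z.

Definition finite_nat_set (S : nat -> Prop) : Prop :=
  exists l : list nat, forall n, S n <-> In n l.

Definition rel_prime_set (S : nat -> Prop) : Prop :=
  (exists n, S n) /\
  forall d : nat, (forall n, S n -> Nat.divide d n) -> d = 1%nat.

(* Main.v *)
Require Import Defs.
From Stdlib Require Import Reals ZArith Arith List Lra Lia.
Open Scope R_scope.

Lemma compact_ext (A B : R -> Prop) : (forall x, A x <-> B x) -> compact A -> compact B.
Proof.
  intros HAB HA f [Hc Ho].
  destruct (HA f) as [D [HD1 HD2]].
  - split; [|exact Ho]. intros x Hx. apply Hc, HAB, Hx.
  - exists D; split; [|exact HD2]. intros x Hx. apply HD1, HAB, Hx.
Qed.

Lemma compact_empty : compact (fun _ => False).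
Proof.
  intros f _. exists (fun _ => False). split.
  - intros x [].
  - exists nil. intros x; simpl; unfold intersection_domain; tauto.
Qed.

Lemma compact_union (A B : R -> Prop) : compact A -> compact B -> compact (fun x => A x \/ B x).
Proof.
  intros HA HB f [Hc Ho].
  destruct (HA f) as [D1 [HD1 [l1 Hl1]]].
  { split; [|exact Ho]. intros x Hx. apply Hc; left; exact Hx. }
  destruct (HB f) as [D2 [HD2 [l2 Hl2]]].
  { split; [|exact Ho]. intros x Hx. apply Hc; right; exact Hx. }
  exists (fun i => D1 i \/ D2 i). split.
  - intros x [Hx|Hx].
    + destruct (HD1 x Hx) as [y [Hy1 Hy2]]. exists y. simpl. tauto.
    + destruct (HD2 x Hx) as [y [Hy1 Hy2]]. exists y. simpl. tauto.
  - exists (l1 ++ l2). intros x. rewrite in_app_iff. simpl in *.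
    unfold intersection_domain in *. rewrite <- Hl1, <- Hl2. tauto.
Qed.

Lemma compact_fin (P : nat -> R -> Prop) : (forall k, compact (P k)) ->
  forall n, compact (fun x => exists k, (k<n)%nat /\ P k x).
Proof.
  intros HP n; induction n.
  - eapply compact_ext; [|exact compact_empty]. intros x; split; [tauto|].
    intros [k [Hk _]]; lia.
  - eapply compact_ext; [|exact (compact_union _ _ IHn (HP n))].
    intros x; split.
    + intros [[k [Hk H]]|H]; exists k || exists n; split; auto; lia.
    + intros [k [Hk H]]. destruct (Nat.eq_dec k n) as [->|Hne]; [right; auto|].
      left; exists k; split; auto; lia.
Qed.

Section S.
Variables (w : nat) (lam : nat -> R) (b : nat -> Z).
Hypothesis hlam : forall k : nat, (k < w)%nat -> lam k < lam (S k).

Lemma mono_le : forall d i, (i + d <= w)%nat -> lam i <= lam (i + d).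
Proof.
  induction d; intros i H. rewrite Nat.add_0_r; lra.
  replace (i + S d)%nat with (S (i + d)) by lia.
  pose proof (IHd i ltac:(lia)). pose proof (hlam (i+d) ltac:(lia)). lra.
Qed.

Lemma mono_lt : forall i j, (i < j)%nat -> (j <= w)%nat -> lam i < lam j.
Proof.
  intros i j Hij Hj. pose proof (hlam i ltac:(lia)).
  pose proof (mono_le (j - S i) (S i) ltac:(lia)).
  replace (S i + (j - S i))%nat with j in H0 by lia. lra.
Qed.

Lemma mono_le' : forall i j, (i <= j)%nat -> (j <= w)%nat -> lam i <= lam j.
Proof.
  intros i j Hij Hj. pose proof (mono_le (j - i) i ltac:(lia)).
  replace (i + (j - i))%nat with j in H by lia. lra.
Qed.

Lemma find_k : forall n t, lam 0 <= t <= lam (S n) -> exists k, (k <= n)%nat /\ lam k <= t <= lam (S k).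
Proof.
  induction n; intros t Ht.
  - exists 0%nat; split; [lia|lra].
  - destruct (Rle_dec t (lam (S n))).
    + destruct (IHn t ltac:(lra)) as [k [Hk H]]. exists k; split; [lia|lra].
    + exists (S n); split; [lia|lra].
Qed.
End S.

Lemma IZR_small (z : Z) : -1 <= IZR z <= 1 -> (z = -1 \/ z = 0 \/ z = 1)%Z.
Proof.
  intros [H1 H2]. apply le_IZR in H1. apply le_IZR in H2. lia.
Qed.

Theorem mainTheorem3 (w : nat) (lam : nat -> R) (b : nat -> Z)
  (hw : (0 < w)%nat)
  (hlam : forall k : nat, (k < w)%nat -> lam k < lam (S k))
  (hlamw : lam w = lam 0%nat + 1)
  (hb : forall k : nat, (1 <= k)%nat -> (k <= w - 1)%nat -> b (k - 1)%nat <> b k)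
  (hbw : (1 + b (w - 1)%nat)%Z <> b 0%nat) :
  N_set (Kprime w lam b) /\
  (forall n : nat, diff_pos_nat (Kprime w lam b) n <-> Dset w b n) /\
  finite_nat_set (Dset w b) /\
  (forall n : nat, Dset w b n -> (0 < n)%nat) /\
  rel_prime_set (Dset w b).
Proof.
  assert (Hpos : forall n : nat, Dset w b n -> (0 < n)%nat).
  { intros n [[k [H1 [H2 ->]]]| ->].
    - specialize (hb k H1 H2). lia.
    - lia. }
  split; [|split; [|split; [|split]]].
  -
    split.
    + apply (compact_fin (fun k x => IZR (b k) + lam k <= x <= IZR (b k) + lam (S k))).
      intros k; apply compact_P3.
    + intros x.
      destruct (archimed (x - lam 0%nat)) as [Ha1 Ha2].
      set (m := (up (x - lam 0%nat) - 1)%Z).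
      assert (Hm : IZR m = IZR (up (x - lam 0%nat)) - 1) by (unfold m; rewrite minus_IZR; reflexivity).
      set (t := x - IZR m).
      assert (Ht : lam 0%nat <= t <= lam (S (w - 1))).
      { replace (S (w-1)) with w by lia. unfold t; lra. }
      destruct (find_k lam (w-1) t Ht) as [k [Hk Hkt]].
      exists (IZR (b k) + t). split.
      * exists k. split; [lia|lra].
      * exists (m - b k)%Z. rewrite minus_IZR. unfold t. lra.
  - intros n; split.
    + intros [Hn [x [y [[j [Hj Hx]] [[k [Hk Hy]] Hxy]]]]].
      rewrite INR_IZR_INZ in Hxy.
      set (u := x - IZR (b j)). set (v := y - IZR (b k)).
      assert (Huv : u - v = IZR (Z.of_nat n - b j + b k)).
      { rewrite plus_IZR, minus_IZR. unfold u, v. lra. }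
      assert (Hu : lam j <= u <= lam (S j)) by (unfold u; lra).
      assert (Hv : lam k <= v <= lam (S k)) by (unfold v; lra).
      pose proof (mono_le' w lam hlam 0 j ltac:(lia) ltac:(lia)).
      pose proof (mono_le' w lam hlam (S j) w ltac:(lia) ltac:(lia)).
      pose proof (mono_le' w lam hlam 0 k ltac:(lia) ltac:(lia)).
      pose proof (mono_le' w lam hlam (S k) w ltac:(lia) ltac:(lia)).
      destruct (IZR_small (Z.of_nat n - b j + b k)) as [Hz|[Hz|Hz]];
        [rewrite <- Huv; lra|..]; rewrite Hz in Huv.
      * (* u = lam 0, v = lam w *)
        assert (j = 0)%nat.
        { destruct (Nat.eq_dec j 0); auto.
          pose proof (mono_lt w lam hlam 0 j ltac:(lia) ltac:(lia)). simpl in Huv. lra. }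
        assert (k = w - 1)%nat.
        { destruct (Nat.eq_dec k (w-1)); auto.
          pose proof (mono_lt w lam hlam (S k) w ltac:(lia) ltac:(lia)). simpl in Huv. lra. }
        subst. right. lia.
      * simpl in Huv.
        destruct (Nat.lt_total j k) as [Hjk|[Hjk|Hjk]].
        -- destruct (Nat.eq_dec k (S j)).
           ++ left. exists k. split; [lia|split; [lia|]].
              replace (k-1)%nat with j by lia. lia.
           ++ pose proof (mono_lt w lam hlam (S j) k ltac:(lia) ltac:(lia)). lra.
        -- subst. lia.
        -- destruct (Nat.eq_dec j (S k)).
           ++ left. exists j. split; [lia|split; [lia|]].
              replace (j-1)%nat with k by lia. lia.
           ++ pose proof (mono_lt w lam hlam (S k) j ltac:(lia) ltac:(lia)). lra.
      * assert (k = 0)%nat.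
        { destruct (Nat.eq_dec k 0); auto.
          pose proof (mono_lt w lam hlam 0 k ltac:(lia) ltac:(lia)). simpl in Huv. lra. }
        assert (j = w - 1)%nat.
        { destruct (Nat.eq_dec j (w-1)); auto.
          pose proof (mono_lt w lam hlam (S j) w ltac:(lia) ltac:(lia)). simpl in Huv. lra. }
        subst. right. lia.
    + intros HD. split; [apply Hpos, HD|].
      destruct HD as [[k [H1 [H2 Hn]]]|Hn].
      * assert (Hk1 : S (k-1) = k) by lia.
        destruct (Z.le_gt_cases (b (k-1)%nat) (b k)).
        -- exists (IZR (b k) + lam k), (IZR (b (k-1)%nat) + lam k).
           split; [exists k; split; [lia|]; pose proof (hlam k ltac:(lia)); lra|].
           split; [exists (k-1)%nat; split; [lia|]; rewrite Hk1;
                   pose proof (hlam (k-1)%nat ltac:(lia)); rewrite Hk1 in H0; lra|].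
           rewrite INR_IZR_INZ. replace (Z.of_nat n) with (b k - b (k-1)%nat)%Z by lia.
           rewrite minus_IZR. lra.
        -- exists (IZR (b (k-1)%nat) + lam k), (IZR (b k) + lam k).
           split; [exists (k-1)%nat; split; [lia|]; rewrite Hk1;
                   pose proof (hlam (k-1)%nat ltac:(lia)); rewrite Hk1 in H0; lra|].
           split; [exists k; split; [lia|]; pose proof (hlam k ltac:(lia)); lra|].
           rewrite INR_IZR_INZ. replace (Z.of_nat n) with (b (k-1)%nat - b k)%Z by lia.
           rewrite minus_IZR. lra.
      * assert (Hw1 : S (w-1) = w) by lia.
        pose proof (hlam (w-1)%nat ltac:(lia)) as Hl1. rewrite Hw1 in Hl1.
        pose proof (hlam 0%nat ltac:(lia)) as Hl0.
        pose proof (mono_le' w lam hlam 1 w ltac:(lia) ltac:(lia)).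
        destruct (Z.le_gt_cases (b 0%nat) (1 + b (w-1)%nat)).
        -- exists (IZR (b (w-1)%nat) + lam w), (IZR (b 0%nat) + lam 0%nat).
           split; [exists (w-1)%nat; split; [lia|]; rewrite Hw1; lra|].
           split; [exists 0%nat; split; [lia|]; lra|].
           rewrite INR_IZR_INZ. replace (Z.of_nat n) with (1 + b (w-1)%nat - b 0%nat)%Z by lia.
           rewrite minus_IZR, plus_IZR. lra.
        -- exists (IZR (b 0%nat) + lam 0%nat), (IZR (b (w-1)%nat) + lam w).
           split; [exists 0%nat; split; [lia|]; lra|].
           split; [exists (w-1)%nat; split; [lia|]; rewrite Hw1; lra|].
           rewrite INR_IZR_INZ. replace (Z.of_nat n) with (b 0%nat - (1 + b (w-1)%nat))%Z by lia.
           rewrite minus_IZR, plus_IZR. lra.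
  - exists (map (fun k => Z.abs_nat (b k - b (k - 1)%nat)) (seq 1 (w-1))
            ++ (Z.abs_nat (1 + b (w - 1)%nat - b 0%nat) :: nil)).
    intros n. rewrite in_app_iff, in_map_iff. simpl. split.
    + intros [[k [H1 [H2 ->]]]| ->].
      * left. exists k. rewrite in_seq. split; [reflexivity|lia].
      * right; left; reflexivity.
    + intros [[k [<- Hk]]|[<-|[]]].
      * left. rewrite in_seq in Hk. exists k. split; [lia|split; [lia|reflexivity]].
      * right; reflexivity.
  - exact Hpos.
  - split; [exists (Z.abs_nat (1 + b (w - 1)%nat - b 0%nat)); right; reflexivity|].
    intros d Hd.
    assert (Hconv : forall z, Nat.divide d (Z.abs_nat z) -> Z.divide (Z.of_nat d) z).
    { intros z [q Hq]. apply Z.divide_abs_r. exists (Z.of_nat q).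
      rewrite <- Nat2Z.inj_abs_nat, Hq. lia. }
    assert (Htel : forall m, (m <= w - 1)%nat -> Z.divide (Z.of_nat d) (b m - b 0%nat)).
    { induction m; intros Hm.
      - rewrite Z.sub_diag. apply Z.divide_0_r.
      - replace (b (S m) - b 0%nat)%Z with ((b (S m) - b (S m - 1)%nat) + (b m - b 0%nat))%Z
          by (replace (S m - 1)%nat with m by lia; ring).
        apply Z.divide_add_r; [|apply IHm; lia].
        apply Hconv, Hd. left. exists (S m). split; [lia|split; [lia|reflexivity]]. }
    assert (H1 : Z.divide (Z.of_nat d) 1).
    { replace 1%Z with ((1 + b (w-1)%nat - b 0%nat) - (b (w-1)%nat - b 0%nat))%Z by ring.
      apply Z.divide_sub_r; [apply Hconv, Hd; right; reflexivity|apply Htel; lia]. }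
    apply Z.divide_1_r in H1. lia.
Qed.
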